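(* Let $n\ge2$, let $\mathbb{F}$ be an algebraic extension of a prime field and let $p$ be an odd prime. (i) If $\mathrm{char}(\mathbb{F})$ is $0$, or $\mathrm{char}(\mathbb{F})=p$ with $\gcd(n,p)=1$, then $\mathrm{Der}(\mathbb{F}T_{4n})=\mathrm{Der}_{\mathrm{inn}}(\mathbb{F}T_{4n})$. (ii) If $\mathrm{char}(\mathbb{F})=p$ with $\gcd(n,p)\ne1$, then $\mathrm{Der}_{\mathrm{inn}}(\mathbb{F}T_{4n})\subsetneq\mathrm{Der}(\mathbb{F}T_{4n})$, i.e. $\mathbb{F}T_{4n}$ has a derivation that is not inner.
   Context: $T_{4n}=\langle a,b\mid a^{2n}=1,\ a^n=b^2,\ b^{-1}ab=a^{-1}\rangle$ is the dicyclic group of order $4n$; $\mathbb{F}T_{4n}$ is its group algebra. A derivation of a ring $R$ is a map $d:R\to R$ with $d(x+y)=d(x)+d(y)$ and $d(xy)=d(x)y+xd(y)$; $\mathrm{Der}(R)$ is the set of all derivations. An inner derivation is one of the form $d_\beta(\alpha)=\alpha\beta-\beta\alpha$ for fixed $\beta\in R$; $\mathrm{Der}_{\mathrm{inn}}(R)$ is the set of inner derivations. *)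

(* Defs.v *)
From HB Require Import structures.
From mathcomp Require Import all_boot all_order all_algebra all_fingroup.
Set Implicit Arguments. Unset Strict Implicit. Unset Printing Implicit Defensive.
Import GRing.Theory.
Local Open Scope ring_scope.

(* Group algebra F[gT] of a finite group gT over a field F: finitely
   supported functions gT -> F (all functions, gT being finite), with
   pointwise addition (the zmodType of {ffun _ -> F}) and convolution product
   (f * g)(x) = sum_y f(y) g(y^-1 x), i.e. sum_x f(x) x * sum_y g(y) y. *)
Definition galg (F : fieldType) (gT : finGroupType) := {ffun gT -> F}.

Definition galg_mul (F : fieldType) (gT : finGroupType) (f g : galg F gT)
  : galg F gT :=
  [ffun x : gT => \sum_(y : gT) f y * g ((y^-1 * x)%g)].

Definition is_derivation (F : fieldType) (gT : finGroupType)
  (d : galg F gT -> galg F gT) : Prop :=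
  (forall x y : galg F gT, d (x + y) = d x + d y) /\
  (forall x y : galg F gT,
     d (galg_mul x y) = galg_mul (d x) y + galg_mul x (d y)).

Definition is_inner_derivation (F : fieldType) (gT : finGroupType)
  (d : galg F gT -> galg F gT) : Prop :=
  exists beta : galg F gT,
    forall alpha : galg F gT, d alpha = galg_mul alpha beta - galg_mul beta alpha.

(* F is an algebraic extension of its prime field: every element is a root of
   a polynomial with integer coefficients whose image in F[X] is nonzero
   (i.e. a nonzero polynomial over the prime subfield Q or F_p). *)
Definition algebraic_over_prime_field (F : fieldType) : Prop :=
  forall x : F, exists q : {poly int},
    map_poly (intr : int -> F) q != 0 /\ root (map_poly (intr : int -> F) q) x.

(* Main.v *)
Require Import Defs.
From mathcomp Require Import all_boot all_order all_algebra all_fingroup all_solvable.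
Set Implicit Arguments. Unset Strict Implicit. Unset Printing Implicit Defensive.
Import GRing.Theory.

Section Part0.
Local Open Scope ring_scope.

Section GA.
Variables (F : fieldType) (gT : finGroupType).
Local Notation A := (galg F gT).
Local Notation "f ** g" := (galg_mul f g) (at level 40, left associativity).
Definition sc (c : F) (f : A) : A := [ffun x => c * f x].
Definition E (g : gT) : A := [ffun x => (x == g)%:R].

Lemma gmulE (f g : A) x : (f ** g) x = \sum_y f y * g (y^-1 * x)%g.
Proof. by rewrite ffunE. Qed.

Lemma gmulDl (f g h : A) : (f + g) ** h = f ** h + g ** h.
Proof. by apply/ffunP=> x; rewrite !ffunE -big_split; apply: eq_bigr => y _; rewrite ffunE mulrDl. Qed.
Lemma gmulDr (f g h : A) : h ** (f + g) = h ** f + h ** g.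
Proof. by apply/ffunP=> x; rewrite !ffunE -big_split; apply: eq_bigr => y _; rewrite ffunE mulrDr. Qed.
Lemma gmulBl (f g h : A) : (f - g) ** h = f ** h - g ** h.
Proof. by apply/ffunP=> x; rewrite !ffunE -sumrB; apply: eq_bigr => y _; rewrite !ffunE mulrBl. Qed.
Lemma gmulBr (f g h : A) : h ** (f - g) = h ** f - h ** g.
Proof. by apply/ffunP=> x; rewrite !ffunE -sumrB; apply: eq_bigr => y _; rewrite !ffunE mulrBr. Qed.
Lemma gmul0l (f : A) : 0 ** f = 0.
Proof. by apply/ffunP=> x; rewrite !ffunE big1 // => y _; rewrite ffunE mul0r. Qed.
Lemma gmul0r (f : A) : f ** 0 = 0.
Proof. by apply/ffunP=> x; rewrite !ffunE big1 // => y _; rewrite ffunE mulr0. Qed.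
Lemma gmulZl c (f g : A) : (sc c f) ** g = sc c (f ** g).
Proof. by apply/ffunP=> x; rewrite !ffunE mulr_sumr; apply: eq_bigr => y _; rewrite ffunE mulrA. Qed.
Lemma gmulZr c (f g : A) : f ** (sc c g) = sc c (f ** g).
Proof.
apply/ffunP=> x; rewrite !ffunE mulr_sumr; apply: eq_bigr => y _.
by rewrite ffunE mulrCA.
Qed.
Lemma gmul_suml I r (P : pred I) (f : I -> A) (g : A) :
  (\sum_(i <- r | P i) f i) ** g = \sum_(i <- r | P i) (f i ** g).
Proof. elim: r => [|i r IH]; rewrite ?big_nil ?big_cons ?gmul0l //; case: (P i) => //; by rewrite gmulDl IH. Qed.
Lemma gmul_sumr I r (P : pred I) (f : I -> A) (g : A) :
  g ** (\sum_(i <- r | P i) f i) = \sum_(i <- r | P i) (g ** f i).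
Proof. elim: r => [|i r IH]; rewrite ?big_nil ?big_cons ?gmul0r //; case: (P i) => //; by rewrite gmulDr IH. Qed.
Lemma scD c (f g : A) : sc c (f + g) = sc c f + sc c g.
Proof. by apply/ffunP=> x; rewrite !ffunE mulrDr. Qed.
Lemma scDl c d (f : A) : sc (c + d) f = sc c f + sc d f.
Proof. by apply/ffunP=> x; rewrite !ffunE mulrDl. Qed.
Lemma scB c (f g : A) : sc c (f - g) = sc c f - sc c g.
Proof. by apply/ffunP=> x; rewrite !ffunE mulrBr. Qed.
Lemma scA c d (f : A) : sc c (sc d f) = sc (c * d) f.
Proof. by apply/ffunP=> x; rewrite !ffunE mulrA. Qed.
Lemma sc1 (f : A) : sc 1 f = f.
Proof. by apply/ffunP=> x; rewrite !ffunE mul1r. Qed.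
Lemma sc0 (f : A) : sc 0 f = 0.
Proof. by apply/ffunP=> x; rewrite !ffunE mul0r. Qed.
Lemma scr0 c : sc c (0 : A) = 0.
Proof. by apply/ffunP=> x; rewrite !ffunE mulr0. Qed.
Lemma sc_sum c I r (P : pred I) (f : I -> A) :
  sc c (\sum_(i <- r | P i) f i) = \sum_(i <- r | P i) sc c (f i).
Proof. elim: r => [|i r IH]; rewrite ?big_nil ?big_cons ?scr0 //; case: (P i) => //; by rewrite scD IH. Qed.
Lemma scN1 (f : A) : sc (-1) f = - f.
Proof. by apply/ffunP=> x; rewrite !ffunE mulN1r. Qed.
Lemma scNat k (f : A) : sc k%:R f = f *+ k.
Proof. by apply/ffunP=> x; rewrite ffunE ffunMnE mulr_natl. Qed.

Lemma gmulA (f g h : A) : (f ** g) ** h = f ** (g ** h).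
Proof.
apply/ffunP=> x; rewrite !ffunE.
rewrite (eq_bigr (fun y => \sum_z f z * g (z^-1 * y)%g * h (y^-1 * x)%g)); last first.
  by move=> y _; rewrite ffunE mulr_suml.
rewrite [RHS](eq_bigr (fun z => \sum_w f z * (g w * h (w^-1 * (z^-1 * x))%g))); last first.
  by move=> z _; rewrite ffunE mulr_sumr.
rewrite exchange_big /=; apply: eq_bigr => z _.
rewrite (reindex_inj (mulgI z)) /=; apply: eq_bigr => w _.
by rewrite mulKg invMg -mulgA mulrA.
Qed.

Lemma gmulEl g (f : A) : E g ** f = [ffun x => f (g^-1 * x)%g].
Proof.
apply/ffunP=> x; rewrite !ffunE (bigD1 g) //= big1 ?addr0; first by rewrite ffunE eqxx mul1r.
by move=> y /negbTE ne; rewrite ffunE ne mul0r.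
Qed.
Lemma gmulEr g (f : A) : f ** E g = [ffun x => f (x * g^-1)%g].
Proof.
apply/ffunP=> x; rewrite !ffunE (bigD1 (x * g^-1)%g) //= big1 ?addr0.
  by rewrite ffunE invMg invgK mulgKV eqxx mulr1.
move=> y ne; rewrite ffunE; case: eqP => [e|]; last by rewrite mulr0.
by case/eqP: ne; rewrite -e invMg invgK mulKVg.
Qed.
Lemma EM g h : E g ** E h = E (g * h)%g.
Proof.
apply/ffunP=> x; rewrite gmulEl !ffunE; congr ((_ : bool)%:R).
by apply/eqP/eqP=> [<-|->]; rewrite ?mulKVg ?mulKg.
Qed.
Lemma decomp (f : A) : f = \sum_g sc (f g) (E g).
Proof.
apply/ffunP=> x; rewrite sum_ffunE (bigD1 x) //= big1 ?addr0.
  by rewrite !ffunE eqxx mulr1.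
by move=> y ne; rewrite !ffunE eq_sym (negbTE ne) mulr0.
Qed.
End GA.

End Part0.

Section Part1.
Local Open Scope ring_scope.

Section Der.
Variables (F : fieldType) (gT : finGroupType).
Local Notation A := (galg F gT).
Local Notation "f ** g" := (galg_mul f g) (at level 40, left associativity).
Local Notation E := (@E F gT).
Local Notation sc := (@sc F gT).

Lemma inner_der (beta : A) : is_derivation (fun a => a ** beta - beta ** a).
Proof.
split=> [x y|x y]; first by rewrite gmulDl gmulDr opprD addrACA.
rewrite gmulBl gmulBr !gmulA.
by rewrite [RHS]addrC addrA subrK.
Qed.

Lemma scN c (f : A) : sc (- c) f = - sc c f.
Proof. by apply/ffunP=> x; rewrite !ffunE mulNr. Qed.
Lemma scrN c (f : A) : sc c (- f) = - sc c f.
Proof. by apply/ffunP=> x; rewrite !ffunE mulrN. Qed.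
Lemma gmulE1r (f : A) : f ** E 1%g = f.
Proof. by apply/ffunP=> x; rewrite gmulEr ffunE invg1 mulg1. Qed.
Lemma gmulE1l (f : A) : E 1%g ** f = f.
Proof. by apply/ffunP=> x; rewrite gmulEl ffunE invg1 mul1g. Qed.
Lemma scE1l c (f : A) : sc c (E 1%g) ** f = sc c f.
Proof. by rewrite gmulZl gmulE1l. Qed.
Lemma scE1r c (f : A) : f ** sc c (E 1%g) = sc c f.
Proof. by rewrite gmulZr gmulE1r. Qed.

Variable d : A -> A.
Hypothesis hd : is_derivation d.

Lemma d0 : d 0 = 0.
Proof. by case: hd => hD _; apply: (addrI (d 0)); rewrite addr0 -hD addr0. Qed.
Lemma dD x y : d (x + y) = d x + d y.
Proof. by case: hd. Qed.
Lemma dM x y : d (x ** y) = d x ** y + x ** d y.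
Proof. by case: hd. Qed.
Lemma dN x : d (- x) = - d x.
Proof. by apply/eqP; rewrite -subr_eq0 opprK -dD addNr d0. Qed.
Lemma d_sum I r (P : pred I) (f : I -> A) :
  d (\sum_(i <- r | P i) f i) = \sum_(i <- r | P i) d (f i).
Proof. elim: r => [|i r IH]; rewrite ?big_nil ?big_cons ?d0 //; case: (P i) => //; by rewrite dD IH. Qed.

Definition dsc c := d (sc c (E 1%g)).

Lemma dscD c e : dsc (c + e) = dsc c + dsc e.
Proof. by rewrite /dsc scDl dD. Qed.
Lemma dscM c e : dsc (c * e) = sc e (dsc c) + sc c (dsc e).
Proof.
rewrite /dsc.
have -> : sc (c * e) (E 1%g) = sc c (E 1%g) ** sc e (E 1%g) by rewrite scE1l scA.
by rewrite dM scE1l scE1r.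
Qed.
Lemma dE1 : d (E 1%g) = 0.
Proof.
have h : d (E 1%g) = d (E 1%g) + d (E 1%g).
  by rewrite -{1}(gmulE1l (E 1%g)) dM gmulE1l gmulE1r.
by apply: (addrI (d (E 1%g))); rewrite addr0 -h.
Qed.
Lemma dsc0 : dsc 0 = 0.
Proof. by rewrite /dsc sc0 d0. Qed.
Lemma dsc1 : dsc 1 = 0.
Proof. by rewrite /dsc sc1 dE1. Qed.
Lemma dscN c : dsc (- c) = - dsc c.
Proof. by apply/eqP; rewrite -subr_eq0 opprK -dscD addNr dsc0. Qed.
Lemma dsc_nat k : dsc k%:R = 0.
Proof. elim: k => [|k IH]; first exact: dsc0. by rewrite -add1n natrD dscD dsc1 IH addr0. Qed.
Lemma dsc_int (z : int) : dsc (z%:~R) = 0.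
Proof. case: z => k; first exact: dsc_nat. by rewrite NegzE mulrNz dscN dsc_nat oppr0. Qed.

Lemma dsc_poly (q : {poly int}) (l : F) :
  dsc (map_poly (intr : int -> F) q).[l] =
  sc (map_poly (intr : int -> F) q)^`().[l] (dsc l).
Proof.
elim/poly_ind: q => [|q c IH].
  by rewrite rmorph0 horner0 deriv0 horner0 dsc0 sc0.
rewrite rmorphD rmorphM /= map_polyX map_polyC /= hornerMXaddC derivMXaddC.
rewrite dscD dsc_int addr0 dscM IH scA hornerD hornerM hornerX scDl.
by rewrite addrC mulrC.
Qed.

Lemma dsc_root (q : {poly int}) (l : F) :
  root (map_poly (intr : int -> F) q) l ->
  (map_poly (intr : int -> F) q)^`().[l] != 0 -> dsc l = 0.
Proof.
move=> /eqP r0 nz; have := dsc_poly q l; rewrite r0 dsc0 => /esym h.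
by rewrite -[dsc l]sc1 -(mulVf nz) -scA h scr0.
Qed.

Hypothesis hsc : forall c, dsc c = 0.

Lemma d_lin c g : d (sc c (E g)) = sc c (d (E g)).
Proof.
have -> : sc c (E g) = sc c (E 1%g) ** E g by rewrite scE1l.
by rewrite dM -/(dsc c) hsc gmul0l add0r scE1l.
Qed.

Lemma d_expand (a : A) : d a = \sum_g sc (a g) (d (E g)).
Proof. by rewrite {1}(decomp a) d_sum; apply: eq_bigr => g _; rewrite d_lin. Qed.

Hypothesis hN : (#|gT|%:R : F) != 0.

Let S := \sum_h d (E h) ** E (h^-1)%g.

Lemma avg g : sc (#|gT|%:R) (d (E g)) = S ** E g - E g ** S.
Proof.
have step h : d (E g) = d (E (g * h)%g) ** E (h^-1)%g - E g ** (d (E h) ** E (h^-1)%g).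
  rewrite -EM dM gmulDl !gmulA EM mulgV gmulE1r.
  by rewrite addrK.
rewrite scNat -sumr_const.
rewrite (eq_bigr _ (fun h _ => step h)) sumrB -gmul_sumr; congr (_ - _).
rewrite /S gmul_suml [RHS](reindex_inj (mulgI g)) /=; apply: eq_bigr => h _.
by rewrite gmulA EM invMg mulgKV.
Qed.

Lemma dEg g : d (E g) = E g ** sc (- (#|gT|%:R)^-1) S - sc (- (#|gT|%:R)^-1) S ** E g.
Proof.
by rewrite gmulZr gmulZl -scB scN -scrN opprB -avg scA mulVf // sc1.
Qed.

Lemma der_inner_main : is_inner_derivation d.
Proof.
exists (sc (- (#|gT|%:R)^-1) S) => a.
rewrite d_expand {2 3}(decomp a) gmul_suml gmul_sumr -sumrB; apply: eq_bigr => g _.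
by rewrite (gmulZl (a g)) (gmulZr (a g)) -scB -dEg.
Qed.
End Der.

End Part1.

Section Part2.
Local Open Scope ring_scope.

Section Sep.
Variable F : fieldType.
Local Notation M q := (map_poly (intr : int -> F) q).

Lemma Mderiv (q : {poly int}) : (M q)^`() = M (q^`()).
Proof. by rewrite deriv_map. Qed.

Lemma deriv0_char0 (P : {poly F}) : [pchar F] =i pred0 -> P^`() = 0 -> (size P <= 1)%N.
Proof.
move=> h0 hd; rewrite leqNgt; apply/negP => hs.
have hP : P != 0 by rewrite -size_poly_eq0 -lt0n (ltn_trans _ hs).
have : P^`()`_(size P).-2 = 0 by rewrite hd coef0.
rewrite coef_deriv -mulr_natr (_ : ((size P).-2).+1 = (size P).-1); last first.
  by case: (size P) hs => [|[|k]].
move/eqP; rewrite mulf_eq0 -lead_coefE lead_coef_eq0 (negbTE hP) /=.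
move/pcharf0P: h0 => ->; by case: (size P) hs => [|[|k]].
Qed.

Lemma sep_exists (hc : [pchar F] =i pred0 \/ exists p, p \in [pchar F]) (l : F) :
  (exists q : {poly int}, M q != 0 /\ root (M q) l) ->
  exists q : {poly int}, root (M q) l /\ (M q)^`().[l] != 0.
Proof.
case=> q0 [nz0 r0].
suff: forall m q, (size (M q) <= m)%N -> M q != 0 -> root (M q) l ->
  exists q : {poly int}, root (M q) l /\ (M q)^`().[l] != 0 by apply; eauto.
elim=> [|m IH] q hs hnz hr.
  by move: hs; rewrite leqn0 size_poly_eq0 (negbTE hnz).
have [hdl|hdl] := boolP ((M q)^`().[l] != 0); first by exists q.
move/negPn/eqP: hdl => hdl.
have hs1 := root_size_gt1 hnz hr.
have [hd|hd] := boolP ((M q)^`() == 0); last first.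
  apply: (IH (q^`())); rewrite -?Mderiv //.
    by rewrite -ltnS (leq_trans _ hs) // lt_size_deriv.
  by rewrite /root hdl.
move/eqP: hd => hd.
case: hc => [h0|[p hp]].
  by move: (deriv0_char0 h0 hd); rewrite leqNgt hs1.
have pp : prime p := pcharf_prime hp.
have p0 : (0 < p)%N := prime_gt0 pp.
pose r : {poly int} := \poly_(j < size q) q`_(j * p).
have hcomp : M q = M r \Po 'X^p.
  apply/polyP=> i; rewrite coef_comp_poly_Xn // coef_map /= coef_map coef_poly /=.
  case: (boolP (p %| i)%N) => hpi.
    rewrite divnK //; case: ltnP => // hle.
    by rewrite nth_default ?mulr0z // (leq_trans hle (leq_div _ _)).
  case: i hpi => [|k] hpi; first by rewrite dvdn0 in hpi.
  have : (M q)^`()`_k = 0 by rewrite hd coef0.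
  rewrite coef_deriv -mulr_natr coef_map /= => /eqP; rewrite mulf_eq0.
  by rewrite -(dvdn_pcharf hp) (negbTE hpi) orbF => /eqP.
have hrnz : M r != 0 by apply: contraNneq hnz => h; rewrite hcomp h comp_poly0.
have hrr : root (M r) l.
  have hfix : map_poly (pFrobenius_aut hp) (M r) = M r.
    by apply/polyP=> i; rewrite !coef_map /= rmorph_int.
  have := horner_map (pFrobenius_aut hp) (M r) l.
  rewrite hfix => h.
  have h2 : (M r).[l ^+ p] = (M r).[l] ^+ p by exact: h.
  move: h2; rewrite -[l ^+ p]hornerXn -horner_comp -hcomp.
  have -> : (M q).[l] = 0 by apply/eqP.
  by move/esym/eqP; rewrite expf_eq0 prime_gt0.
apply: (IH r) => //.
have := size_comp_poly (M r) 'X^p; rewrite -hcomp size_polyXn /= => hsz.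
rewrite -ltnS (leq_trans _ hs) //.
have hr1 : (0 < size (M r))%N by rewrite lt0n size_poly_eq0.
have hq1 : (0 < (size (M q)).-1)%N by rewrite -ltnS prednK // ltnW.
have ha : (0 < (size (M r)).-1)%N by move: hq1; rewrite hsz muln_gt0 => /andP[].
rewrite -(prednK hr1) -(prednK (ltnW hs1)) ltnS hsz -[X in (X < _)%N]muln1 ltn_mul2l ha.
exact: prime_gt1.
Qed.
End Sep.

End Part2.

Section Part3.
Local Open Scope group_scope.

Section Grp.
Variables (gT : finGroupType) (n : nat) (a b : gT).
Hypotheses (ha : a ^+ (n + n) = 1) (hab : a ^+ n = b ^+ 2) (hc : a ^ b = a^-1)
  (hgen : <[a]> <*> <[b]> = [set: gT]).
Local Notation C := <[a]>.

Lemma conjbV y : y \in C -> y ^ b = y^-1.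
Proof. by case/cycleP=> i ->; rewrite conjXg hc expgVn. Qed.

Lemma bconjV y : y \in C -> b * y * b^-1 = y^-1.
Proof.
move=> yC; have := conjbV (groupVr yC); rewrite conjgE invgK => h.
by rewrite -[in LHS]h mulVKg mulgK.
Qed.

Lemma b2C : b * b \in C.
Proof. have -> : b * b = b ^+ 2 by rewrite expgS expg1. by rewrite -hab mem_cycle. Qed.

Lemma Cprod x y : x * b^-1 \in C -> y * b^-1 \in C ->
  x * y = (x * b^-1) * (y * b^-1)^-1 * (b * b).
Proof.
move=> hx hy.
have e : (y * b^-1)^-1 * (b * b) = b * (y * b^-1) * b^-1 * (b * b).
  by rewrite bconjV.
by rewrite -mulgA e !mulgA !mulgVK.
Qed.

Definition Kset := [set x | (x \in C) || (x * b^-1 \in C)].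

Lemma Kgroup : group_set Kset.
Proof.
apply/group_setP; split; first by rewrite inE group1.
move=> x y; rewrite !inE => /orP[hx|hx] /orP[hy|hy].
- by rewrite groupM.
- by apply/orP; right; rewrite -mulgA groupM.
- apply/orP; right.
  have -> : x * y * b^-1 = (x * b^-1) * (b * y * b^-1) by rewrite !mulgA mulgVK.
  by rewrite bconjV // groupM ?groupV.
- apply/orP; left; rewrite Cprod //; apply: groupM; last exact: b2C.
  by apply: groupM; rewrite ?groupV.
Qed.

Lemma Ccases x : x \in C \/ (x \notin C /\ x * b^-1 \in C).
Proof.
have : x \in Kset.
  have KG : [set: gT] \subset Group Kgroup.
    rewrite -hgen join_subG !cycle_subG !inE cycle_id /= mulgV group1 orbT.
    by [].
  by apply: (subsetP KG); rewrite inE.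
rewrite inE; case: (boolP (x \in C)) => //= hx hxb; [by left | by right].
Qed.

Lemma notC_sq x : x \notin C -> x * b^-1 \in C -> x ^+ 2 = a ^+ n.
Proof.
move=> _ hy; rewrite expgS expg1 Cprod // mulgV mul1g hab expgS expg1 //.
Qed.

Lemma notC_conj x : x \notin C -> x * b^-1 \in C -> a ^ x = a^-1.
Proof.
move=> _ hy.
have -> : x = (x * b^-1) * b by rewrite mulgVK.
rewrite conjgM.
have -> : a ^ (x * b^-1) = a.
  case/cycleP: hy => i ->.
  have cm : commute a (a ^+ i) by apply: commuteX.
  by rewrite conjgE cm mulKg.
exact: hc.
Qed.
End Grp.

End Part3.

Section Part4.
Local Open Scope ring_scope.

Section Cocycle.
Variables (F : fieldType) (gT : finGroupType).
Local Notation A := (galg F gT).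
Local Notation "f ** g" := (galg_mul f g) (at level 40, left associativity).
Local Notation E := (@E F gT).
Local Notation sc := (@sc F gT).

Lemma sc_suml I r (P : pred I) (c : I -> F) (f : A) :
  sc (\sum_(i <- r | P i) c i) f = \sum_(i <- r | P i) sc (c i) f.
Proof. elim: r => [|i r IH]; rewrite ?big_nil ?big_cons ?sc0 //; case: (P i) => //; by rewrite scDl IH. Qed.

Lemma bil (f g : gT -> F) (P Q : gT -> A) :
  (\sum_u sc (f u) (P u)) ** (\sum_h sc (g h) (Q h)) =
  \sum_u \sum_h sc (f u * g h) (P u ** Q h).
Proof.
rewrite gmul_suml; apply: eq_bigr => u _.
rewrite gmulZl gmul_sumr sc_sum; apply: eq_bigr => h _.
by rewrite gmulZr scA.
Qed.

Variable D : gT -> A.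
Hypothesis hD : forall g h, D (g * h)%g = D g ** E h + E g ** D h.
Definition dDer (x : A) : A := \sum_g sc (x g) (D g).

Lemma cocycle_der : is_derivation dDer.
Proof.
split=> [x y|x y].
  by rewrite /dDer -big_split; apply: eq_bigr => g _; rewrite ffunE scDl.
rewrite [X in _ ** X + _](decomp y) [X in _ + X ** _](decomp x) /dDer !bil -big_split /=.
rewrite (eq_bigr (fun g => \sum_u sc (x u * y (u^-1 * g)%g) (D g))); last first.
  by move=> g _; rewrite ffunE sc_suml.
rewrite exchange_big /=; apply: eq_bigr => u _.
rewrite (reindex_inj (mulgI u)) -big_split /=; apply: eq_bigr => h _.
by rewrite mulKg hD scD.
Qed.

Lemma dDer_E g : dDer (E g) = D g.
Proof.
rewrite /dDer (bigD1 g) //= big1 ?addr0; first by rewrite ffunE eqxx sc1.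
by move=> h /negbTE ne; rewrite ffunE ne sc0.
Qed.
End Cocycle.

End Part4.

Section Part5.
Local Open Scope ring_scope.

Section Outer.
Variables (F : fieldType) (gT : finGroupType) (n p : nat) (a b : gT).
Hypotheses (ha : (a ^+ (n + n) = 1)%g) (hab : (a ^+ n = b ^+ 2)%g) (hc : (a ^ b = a^-1)%g)
  (hgen : (<[a]> <*> <[b]> = [set: gT])%g).
Hypotheses (hp : p \in [pchar F]) (hpa : (p %| #[a]%g)%N) (hpn : (p %| n)%N) (hpodd : odd p).
Local Notation A := (galg F gT).
Local Notation "f ** g" := (galg_mul f g) (at level 40, left associativity).
Local Notation E := (@E F gT).
Local Notation sc := (@sc F gT).
Local Notation C := (<[a]>%g).

Definition iota (y : gT) : F :=
  if [pick k : 'I_#[a]%g | (a ^+ k == y)%g] is Some k then (k : nat)%:R else 0.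

Lemma natr_order i : (i %% #[a]%g)%:R = i%:R :> F.
Proof.
rewrite {2}(divn_eq i #[a]%g) natrD natrM.
by have := hpa; rewrite (dvdn_pcharf hp) => /eqP ->; rewrite mulr0 add0r.
Qed.

Lemma iotaX i : iota (a ^+ i)%g = i%:R.
Proof.
rewrite /iota; case: pickP => [k /eqP hk | none].
  have /eqP := hk; rewrite eq_expg_mod_order modn_small // => /eqP ->.
  exact: natr_order.
have := none (Ordinal (ltn_pmod i (order_gt0 a))).
by rewrite /= expg_mod_order eqxx.
Qed.

Lemma iotaM y z : y \in C -> z \in C -> iota (y * z)%g = iota y + iota z.
Proof. by case/cycleP=> i -> /cycleP[j ->]; rewrite -expgD !iotaX natrD. Qed.

Lemma iota1 : iota 1%g = 0.
Proof. by rewrite -(expg0 a) iotaX. Qed.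

Lemma iotaV y : y \in C -> iota (y^-1)%g = - iota y.
Proof.
move=> yC; apply/eqP; rewrite -addr_eq0 -iotaM ?groupV //.
by rewrite mulVg iota1.
Qed.

Definition psi (x : gT) : F := if x \in C then iota x else - iota (x * b^-1)%g.
Definition eps (x : gT) : F := if x \in C then 1 else -1.

Lemma notC_l g h : g \in C -> h \notin C -> (g * h)%g \notin C.
Proof. by move=> gC; apply: contra => ghC; rewrite -(mulKg g h) groupM ?groupV. Qed.
Lemma notC_r g h : g \notin C -> h \in C -> (g * h)%g \notin C.
Proof. by move=> gC hC; apply: contra gC => ghC; rewrite -(mulgK h g) groupM ?groupV. Qed.

Lemma psiM g h : psi (g * h)%g = eps h * psi g + psi h.
Proof.
rewrite /psi /eps.
case: (Ccases hab hc hgen g) => [gC|[gC gbC]]; case: (Ccases hab hc hgen h) => [hC|[hC hbC]].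
- by rewrite groupM // gC hC iotaM // mul1r.
- rewrite (negbTE (notC_l gC hC)) gC (negbTE hC) -mulgA iotaM //.
  by rewrite mulN1r opprD.
- rewrite (negbTE (notC_r gC hC)) (negbTE gC) hC mul1r.
  have -> : (g * h * b^-1 = (g * b^-1) * (b * h * b^-1))%g by rewrite !mulgA mulgVK.
  rewrite (bconjV hc) // iotaM ?groupV // iotaV //.
  by rewrite opprD opprK.
- have ghC : (g * h)%g \in C.
    by rewrite (Cprod hc gbC hbC); apply: groupM; [apply: groupM; rewrite ?groupV | exact: (b2C hab)].
  rewrite ghC (negbTE gC) (negbTE hC) (Cprod hc gbC hbC) iotaM ?(b2C hab) //; last first.
    by apply: groupM; rewrite ?groupV.
  rewrite iotaM ?groupV // iotaV //.
  have -> : (b * b = a ^+ n)%g by rewrite hab expgS expg1.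
  rewrite iotaX; have := hpn; rewrite (dvdn_pcharf hp) => /eqP ->.
  by rewrite addr0 mulN1r opprK.
Qed.

Definition z : A := E a - E (a^-1)%g.

Lemma zE h : z ** E h = sc (eps h) (E h ** z).
Proof.
rewrite /z /eps gmulBl gmulBr !EM.
case: (Ccases hab hc hgen h) => [hC|[hC hbC]].
  rewrite hC sc1.
  case/cycleP: hC => i ->.
  have c1 : commute a (a ^+ i)%g by apply: commuteX.
  have c2 : commute (a^-1)%g (a ^+ i)%g by apply: commuteX; apply: commute_sym; apply: commuteV; exact: commute_refl.
  by rewrite c1 c2.
rewrite (negbTE hC) scN1 opprB.
have hx := notC_conj hc hC hbC.
have e1 : (a * h = h * a^-1)%g by rewrite conjgC hx.
have e2 : (a^-1 * h = h * a)%g by rewrite conjgC conjVg hx invgK.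
by rewrite e1 e2.
Qed.

Definition Dg (x : gT) : A := sc (psi x) (E x ** z).

Lemma Dg_cocycle g h : Dg (g * h)%g = Dg g ** E h + E g ** Dg h.
Proof.
rewrite /Dg gmulZl gmulZr gmulA zE gmulZr scA -gmulA EM.
by rewrite -scDl psiM mulrC.
Qed.

Lemma a2 : (a ^+ 2 != 1)%g.
Proof.
apply/negP => /eqP h2.
have : (#[a]%g %| 2)%N by rewrite order_dvdn h2.
move=> /(dvdn_trans hpa); rewrite dvdn_prime2 //; last first.
  exact: pcharf_prime hp.
by move/eqP => e; move: hpodd; rewrite e.
Qed.

Definition cc : A := E a + E (a^-1)%g.

Lemma cc_central (beta : A) : cc ** beta = beta ** cc.
Proof.
apply/ffunP=> x; rewrite /cc gmulDl gmulDr !gmulEl !gmulEr !ffunE invgK.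
case: (Ccases hab hc hgen x) => [xC|[xC xbC]].
  case/cycleP: xC => i ->.
  have c1 : commute a (a ^+ i)%g by apply: commuteX.
  have c2 : commute (a^-1)%g (a ^+ i)%g by apply: commuteX; apply: commute_sym; apply: commuteV; exact: commute_refl.
  by rewrite c1 c2 addrC.
have hx := notC_conj hc xC xbC.
have e1 : (a * x = x * a^-1)%g by rewrite conjgC hx.
have e2 : (a^-1 * x = x * a)%g by rewrite conjgC conjVg hx invgK.
by rewrite e1 e2 addrC.
Qed.

Lemma outer : exists d : A -> A, is_derivation d /\ ~ is_inner_derivation d.
Proof.
exists (dDer Dg); split; first exact: cocycle_der Dg_cocycle.
case=> beta hb.
have h1 := hb cc; rewrite cc_central subrr in h1.
move: h1; rewrite /cc (cocycle_der Dg_cocycle).1 !dDer_E /Dg.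
have pa : psi a = 1 by rewrite /psi cycle_id -(expg1 a) iotaX.
have pa' : psi (a^-1)%g = -1 by rewrite /psi groupV cycle_id iotaV ?cycle_id // -(expg1 a) iotaX.
rewrite pa pa' sc1 scN1 -gmulBl -/z /z gmulBl !gmulBr !EM mulgV mulVg.
move/(congr1 (fun f : A => f 1%g)); rewrite !ffunE eqxx.
have -> : (1%g == (a * a)%g) = false by rewrite eq_sym; apply/negbTE; move: a2; rewrite expgS expg1.
have -> : (1%g == (a^-1 * a^-1)%g) = false.
  rewrite eq_sym.
  by apply/negbTE; rewrite -invMg eq_invg1; move: a2; rewrite expgS expg1.
move/eqP; rewrite /= mulr0n mulr1n sub0r subr0 -opprD oppr_eq0 -mulr2n.
by rewrite -(dvdn_pcharf hp) dvdn_prime2 ?(pcharf_prime hp) //; move=> /eqP e; move: hpodd; rewrite e.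
Qed.
End Outer.

End Part5.

Section Part6.
Local Open Scope group_scope.

Lemma extract (gT : finGroupType) (n : nat)
  (hT : ([set: gT]%G \isog
          Grp (a : b : (a ^+ (n + n) = 1, a ^+ n = b ^+ 2, a ^ b = a ^-1)))%g) :
  exists a b : gT, [/\ a ^+ (n + n) = 1, a ^+ n = b ^+ 2, a ^ b = a^-1 &
     <[a]> <*> <[b]> = [set: gT]].
Proof.
have := isoGrp_hom hT; case/existsP => -[a b] /= /eqP[defG ha hab hc].
by exists a, b; split.
Qed.

Lemma p_dvd_order (gT : finGroupType) (n p : nat) (a b : gT)
  (hT : ([set: gT]%G \isog
          Grp (a : b : (a ^+ (n + n) = 1, a ^+ n = b ^+ 2, a ^ b = a ^-1)))%g)
  (hp : prime p) (hodd : odd p) (hpn : (p %| n)%N)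
  (hc : a ^ b = a^-1) (hgen : <[a]> <*> <[b]> = [set: gT]) :
  (p %| #[a])%N.
Proof.
apply/idPn => npa.
have p1 : (1 < p)%N := prime_gt1 hp.
have := isoGrp_hom (Grp_dihedral p1); case/existsP => -[x y] /= /eqP[defD hx hy hxy].
have homD : [set: 'D_(p.*2)]%G \homg
   Grp (a : b : (a ^+ (n + n) = 1, a ^+ n = b ^+ 2, a ^ b = a ^-1)).
  apply/existsP; exists (x, y); rewrite /= !xpair_eqE /= defD eqxx /=.
  case/dvdnP: hpn => k ->.
  by rewrite -mulnDl !(mulnC _ p) !expgM hx !expg1n hy hxy !eqxx.
have : [set: 'D_(p.*2)]%G \homg [set: gT] by rewrite hT.
case/homgP=> f fim.
set u := f a; set v := f b.
have ou : (#[u] %| 2)%N.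
  have d1 : (#[u] %| #[a])%N := morph_order f (in_setT a).
  have d2 : (#[u] %| p.*2)%N.
    by have := order_dvdG (G := [set: 'D_(p.*2)]%G) (in_setT u); rewrite card_dihedral.
  have cop : coprime #[u] p.
    by rewrite coprime_sym; apply: coprime_dvdr d1 _; rewrite prime_coprime.
  by rewrite -(Gauss_dvdr 2 cop) muln2.
have u2 : u ^+ 2 = 1 by apply/eqP; rewrite -order_dvdn.
have uv : u ^ v = u.
  rewrite /u /v -morphJ ?in_setT // hc morphV ?in_setT //.
  by apply/eqP; rewrite eq_invg_mul -u2 expgS expg1.
have cuv : commute v u by rewrite /commute [RHS]conjgC uv.
have abD : abelian [set: 'D_(p.*2)].
  have e : f @* (<[a]> <*> <[b]>) = <[u]> <*> <[v]>.
    by rewrite morphimY ?subsetT // !morphim_cycle ?in_setT.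
  rewrite hgen fim in e; rewrite e.
  rewrite abelianY !cycle_abelian /= cycle_subG.
  by apply/centP => w /cycleP[i ->]; apply: commuteX.
have cxy : commute x y.
  have := subsetP abD x (in_setT x); move/centP => h; exact: h y (in_setT y).
have x2 : x ^+ 2 = 1.
  have e : x ^ y = x by rewrite conjgE cxy mulKg.
  by rewrite expgS expg1 -{1}e hxy mulVg.
have : (#[x] %| 1)%N.
  have c2 : coprime 2 p by rewrite coprime2n.
  by rewrite -(eqnP c2) dvdn_gcd !order_dvdn x2 hx !eqxx.
rewrite dvdn1 order_eq1 => /eqP x1.
move: defD; rewrite x1 cycle1 joing1G => ey.
have : (#[y] %| 2)%N by rewrite order_dvdn hy.
rewrite /order ey card_dihedral //.
move=> /(dvdn_leq (isT : (0 < 2)%N)) h.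
have : (p.*2 <= 1.*2)%N by [].
by rewrite leq_double leqNgt p1.
Qed.

End Part6.

Section Part7.

Lemma p_not_dvd (gT : finGroupType) (n p : nat) (a b : gT)
  (hp : prime p) (hodd : odd p) (hcop : coprime n p)
  (ha : (a ^+ (n + n) = 1)%g) (hab : (a ^+ n = b ^+ 2)%g) (hc : (a ^ b = a^-1)%g)
  (hgen : (<[a]> <*> <[b]> = [set: gT])%g) : ~~ (p %| #|gT|)%N.
Proof.
have np2 : ~~ (p %| 2)%N.
  by rewrite dvdn_prime2 //; apply/eqP => e; move: hodd; rewrite e.
have npn : ~~ (p %| n)%N by rewrite -prime_coprime // coprime_sym.
apply/negP => hd.
have hd' : (p %| #|[set: gT]%G|)%N by rewrite cardsT.
case: (Cauchy hp hd') => x _ ox.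
case: (Ccases hab hc hgen x) => [xC | [xC xbC]].
  have h1 : (#[x]%g %| #[a]%g)%N by apply: (order_dvdG (G := <[a]>%G)).
  have h2 : (#[a]%g %| n + n)%N by rewrite order_dvdn ha.
  have := dvdn_trans h1 h2; rewrite ox addnn -muln2 Euclid_dvdM //.
  by rewrite (negbTE npn) (negbTE np2).
have h4 : (x ^+ (2 * 2) = 1)%g by rewrite expgM (notC_sq hab hc xC xbC) -expgM muln2 -addnn.
have : (#[x]%g %| 2 * 2)%N by rewrite order_dvdn h4.
by rewrite ox Euclid_dvdM // (negbTE np2).
Qed.

Lemma inner_is_der (F : fieldType) (gT : finGroupType) (d : galg F gT -> galg F gT) :
  is_inner_derivation d -> is_derivation d.
Proof.
case=> beta hb; have [h1 h2] := inner_der beta; split=> x y; rewrite !hb; [exact: h1 | exact: h2].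
Qed.


End Part7.
Theorem corollary4p6 (n : nat) (F : fieldType) (gT : finGroupType) (p : nat)
  (hn : (2 <= n)%N)
  (hF : algebraic_over_prime_field F)
  (hp : prime p) (hpodd : odd p)
  (hT : ([set: gT]%G \isog
          Grp (a : b : (a ^+ (n + n) = 1, a ^+ n = b ^+ 2, a ^ b = a ^-1)))%g) :
  ( ( [pchar F]%R =i pred0 \/ (p \in [pchar F]%R /\ coprime n p) ) ->
      forall d : galg F gT -> galg F gT,
        is_derivation d <-> is_inner_derivation d )
  /\
  ( (p \in [pchar F]%R /\ ~~ coprime n p) ->
      (forall d : galg F gT -> galg F gT,
         is_inner_derivation d -> is_derivation d) /\
      (exists d : galg F gT -> galg F gT,
         is_derivation d /\ ~ is_inner_derivation d) ).
Proof.
have [a [b [ha hab hc hgen]]] := extract hT.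
split.
  move=> hch d; split; last exact: inner_is_der.
  move=> hd; apply: (der_inner_main hd).
    move=> c.
    have hc' : [pchar F]%R =i pred0 \/ exists p, p \in [pchar F]%R.
      by case: hch => [h|[h _]]; [left | right; exists p].
    have [q [hr hq]] := sep_exists hc' (hF c).
    exact: dsc_root hd q c hr hq.
  case: hch => [h0 | [hpc hcop]].
    move/pcharf0P: h0 => ->; rewrite -lt0n -cardsT.
    exact: (cardG_gt0 [set: gT]%G).
  rewrite -(dvdn_pcharf hpc); exact: (p_not_dvd hp hpodd hcop ha hab hc hgen).
move=> [hpc hncop]; split; first exact: inner_is_der.
have hpn : (p %| n)%N by move: hncop; rewrite coprime_sym prime_coprime // negbK.
apply: (outer hab hc hgen hpc _ hpn hpodd).
exact: (p_dvd_order hT hp hpodd hpn hc hgen).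
Qed.
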